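(* Let $G(z)=\sum_{n=0}^{\infty}\binom{3n}{n}\frac{2z^n}{n+1}$, $|z|<4/27$. Then \[ G(z)=\mathcal{B}_3(z)+\mathcal{B}_3(z)^2, \] where $\mathcal{B}_3(z)=\sum_{n\ge0}\binom{3n+1}{n}\frac{z^n}{3n+1}$, and $G$ satisfies the cubic equation \[ 2-z-(1+2z)G(z)+2zG(z)^2-z^2G(z)^3=0 . \]
   Context: $\mathcal{B}_3(z)=\sum_{n\ge0}\binom{3n+1}{n}\frac{z^n}{3n+1}$ denotes the generating function of the Fuss–Catalan numbers of order 3. It satisfies $\mathcal{B}_3(z)=1+z\mathcal{B}_3(z)^3$. *)

(* Defs.v *)
From HB Require Import structures.
From mathcomp Require Import all_boot all_order all_algebra.
Set Implicit Arguments. Unset Strict Implicit. Unset Printing Implicit Defensive.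
Import Order.TTheory GRing.Theory Num.Theory.
Local Open Scope ring_scope.

Definition fps := nat -> rat.

Definition fps_const (c : rat) : fps := fun n => if n is 0%N then c else 0.
Definition fps_z : fps := fun n => if n == 1%N then 1 else 0.

Definition fps_add (a b : fps) : fps := fun n => a n + b n.
Definition fps_opp (a : fps) : fps := fun n => - a n.
Definition fps_mul (a b : fps) : fps :=
  fun n => \sum_(i < n.+1) a i * b (n - i)%N.

Definition B3 : fps := fun n => ('C(3 * n + 1, n))%:R / (3 * n + 1)%:R.

Definition Gser : fps := fun n => ('C(3 * n, n))%:R * 2 / (n + 1)%:R.

(* Main.v *)
Require Import Defs.
From HB Require Import structures.
From mathcomp Require Import all_boot all_order all_algebra.
From mathcomp Require Import boolp.
From mathcomp Require Import ring lra zify.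
Set Warnings "-notation-overridden -ambiguous-paths -redundant-canonical-projection".
Import Order.TTheory GRing.Theory Num.Theory.
Local Open Scope ring_scope.

HB.instance Definition _ := gen_eqMixin fps.
HB.instance Definition _ := gen_choiceMixin fps.

Lemma fps_addA : associative fps_add.
Proof. by move=> a b c; apply/funext=> n; rewrite /fps_add addrA. Qed.
Lemma fps_addC : commutative fps_add.
Proof. by move=> a b; apply/funext=> n; rewrite /fps_add addrC. Qed.
Lemma fps_add0 : left_id (fps_const 0) fps_add.
Proof. by move=> a; apply/funext=> n; rewrite /fps_add; case: n => [|n] /=; rewrite add0r. Qed.
Lemma fps_addN : left_inverse (fps_const 0) fps_opp fps_add.
Proof. by move=> a; apply/funext=> n; rewrite /fps_add /fps_opp addNr; case: n. Qed.

HB.instance Definition _ := GRing.isZmodule.Build fps fps_addA fps_addC fps_add0 fps_addN.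

Definition trunc (N : nat) (a : fps) : {poly rat} := \poly_(i < N) a i.

Lemma coef_trunc N a i : (i < N)%N -> (trunc N a)`_i = a i.
Proof. by move=> h; rewrite coef_poly h. Qed.

Lemma mul_trunc N a b n : (n < N)%N -> fps_mul a b n = (trunc N a * trunc N b)`_n.
Proof.
move=> hn; rewrite coefM /fps_mul; apply: eq_bigr => i _.
rewrite !coef_trunc //; first by apply: leq_ltn_trans hn; apply: leq_subr.
by apply: leq_ltn_trans hn; rewrite -ltnS.
Qed.

Lemma coefM_agree N (p q r : {poly rat}) n : (n < N)%N ->
  (forall j, (j < N)%N -> p`_j = q`_j) -> (p * r)`_n = (q * r)`_n.
Proof.
move=> hn h; rewrite !coefM; apply: eq_bigr => i _; rewrite h //.
by apply: leq_ltn_trans hn; rewrite -ltnS.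
Qed.

Lemma fps_mulA : associative fps_mul.
Proof.
move=> a b c; apply/funext=> n.
rewrite (mul_trunc n.+1) // (mul_trunc n.+1 (fps_mul a b)) //.
have e1 : (trunc n.+1 a * trunc n.+1 (fps_mul b c))`_n =
          (trunc n.+1 a * (trunc n.+1 b * trunc n.+1 c))`_n.
  rewrite [trunc _ a * trunc _ (fps_mul b c)]mulrC [trunc _ a * (_ * _)]mulrC.
  apply: (coefM_agree n.+1) => // j hj.
  by rewrite coef_trunc // (mul_trunc n.+1).
have e2 : (trunc n.+1 (fps_mul a b) * trunc n.+1 c)`_n =
          ((trunc n.+1 a * trunc n.+1 b) * trunc n.+1 c)`_n.
  apply: (coefM_agree n.+1) => // j hj.
  by rewrite coef_trunc // (mul_trunc n.+1).
by rewrite e1 e2 mulrA.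
Qed.

Lemma fps_mulC : commutative fps_mul.
Proof. by move=> a b; apply/funext=> n; rewrite !(mul_trunc n.+1) // mulrC. Qed.

Lemma fps_mul1 : left_id (fps_const 1) fps_mul.
Proof.
move=> a; apply/funext=> n; rewrite /fps_mul big_ord_recl /= mul1r subn0.
by rewrite big1 ?addr0 // => i _; rewrite mul0r.
Qed.

Lemma fps_mulDl : left_distributive fps_mul fps_add.
Proof.
move=> a b c; apply/funext=> n; rewrite /fps_mul /fps_add -big_split /=.
by apply: eq_bigr => i _; rewrite mulrDl.
Qed.

Lemma fps_one_neq0 : fps_const 1 != fps_const 0.
Proof. by apply/eqP => /(congr1 (fun f => f 0%N)) /eqP; rewrite oner_eq0. Qed.

HB.instance Definition _ := GRing.Zmodule_isComNzRing.Build fps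
  fps_mulA fps_mulC fps_mul1 fps_mulDl fps_one_neq0.

Lemma fnz n : (n`!%:R : rat) != 0.
Proof. by rewrite pnatr_eq0 -lt0n fact_gt0. Qed.

Lemma snz n : (n.+1%:R : rat) != 0.
Proof. by rewrite pnatr_eq0. Qed.

Lemma binr n k : (k <= n)%N ->
  ('C(n, k))%:R = n`!%:R / (k`!%:R * (n - k)`!%:R) :> rat.
Proof.
move=> h; rewrite -(bin_fact h) !natrM mulfK //.
by rewrite mulf_neq0 // fnz.
Qed.

Lemma B3_rec m :
  (2 * m.+1 * (2 * m + 3))%:R * B3 m.+1 = (3 * (3 * m + 1) * (3 * m + 2))%:R * B3 m.
Proof.
rewrite /B3 !binr; try lia.
have -> : (3 * m.+1 + 1 - m.+1 = (2 * m + 1).+2)%N by lia.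
have -> : (3 * m + 1 - m = 2 * m + 1)%N by lia.
have -> : (3 * m.+1 + 1 = (3 * m + 1).+3)%N by lia.
rewrite !factS.
have h1 := fnz (3 * m + 1); have h2 := fnz m; have h3 := fnz (2 * m + 1).
rewrite !(natrD, natrM, mulrSr) /=.
have hm : 0 <= (m%:R : rat) by apply: ler0n.
field; rewrite h2 h3 /=.
by repeat (apply/andP; split); apply: lt0r_neq0; lra.
Qed.

Lemma G_rec m :
  (2 * (2 * m + 1) * (m + 2))%:R * Gser m.+1 = (3 * (3 * m + 1) * (3 * m + 2))%:R * Gser m.
Proof.
rewrite /Gser !binr; try lia.
have -> : (3 * m.+1 - m.+1 = (2 * m).+2)%N by lia.
have -> : (3 * m - m = 2 * m)%N by lia.
have -> : (3 * m.+1 = (3 * m).+3)%N by lia.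
rewrite !factS.
have h1 := fnz (3 * m); have h2 := fnz m; have h3 := fnz (2 * m).
rewrite !(natrD, natrM, mulrSr) /=.
have hm : 0 <= (m%:R : rat) by apply: ler0n.
field; rewrite ?h1 ?h2 ?h3 /=.
by repeat (apply/andP; split); apply: lt0r_neq0; lra.
Qed.

Lemma B3_0 : B3 0 = 1.
Proof. by rewrite /B3 /= bin0 divr1. Qed.

Lemma G_0 : Gser 0 = 2.
Proof. by rewrite /Gser /= bin0 mul1r divr1. Qed.

Notation z := fps_z.

Lemma coefD (a b : fps) n : (a + b) n = a n + b n. Proof. by []. Qed.
Lemma coefN (a : fps) n : (- a) n = - a n. Proof. by []. Qed.
Lemma coefB (a b : fps) n : (a - b) n = a n - b n. Proof. by []. Qed.
Lemma coef0 n : (0 : fps) n = 0. Proof. by case: n. Qed.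
Lemma coefMM (a b : fps) n : (a * b) n = \sum_(i < n.+1) a i * b (n - i)%N.
Proof. by []. Qed.
Lemma coefMn (a : fps) k n : (a *+ k) n = a n *+ k.
Proof. by elim: k => [|k IH]; rewrite ?mulr0n ?coef0 // !mulrS coefD IH. Qed.
Lemma coefnatM (a : fps) k n : (k%:R * a) n = k%:R * a n.
Proof. by rewrite !mulr_natl coefMn. Qed.
Lemma coefM0 (a b : fps) : (a * b) 0%N = a 0%N * b 0%N.
Proof. by rewrite coefMM big_ord1. Qed.
Lemma coefz0 (a : fps) : (z * a) 0%N = 0.
Proof. by rewrite coefM0 mul0r. Qed.
Lemma coefzS (a : fps) n : (z * a) n.+1 = a n.
Proof.
rewrite coefMM big_ord_recl big_ord_recl /= mul0r add0r mul1r subSS subn0.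
by rewrite big1 ?addr0 // => i _; rewrite mul0r.
Qed.
Lemma coef1 n : (1 : fps) n = if n is 0%N then 1 else 0. Proof. by []. Qed.
Lemma coefnat k n : (k%:R : fps) n = if n is 0%N then k%:R else 0.
Proof. by rewrite -(mulr1 (k%:R : fps)) coefnatM coef1; case: n => [|n]; rewrite ?mulr1 ?mulr0. Qed.

(* theta = z d/dz *)
Definition th (a : fps) : fps := fun n => n%:R * a n.
Lemma thD a b : th (a + b) = th a + th b.
Proof. by apply/funext=> n; rewrite /th coefD mulrDr. Qed.
Lemma thN a : th (- a) = - th a.
Proof. by apply/funext=> n; rewrite /th coefN mulrN. Qed.
Lemma thB a b : th (a - b) = th a - th b.
Proof. by rewrite thD thN. Qed.
Lemma thnat k : th k%:R = 0.
Proof. by apply/funext=> n; rewrite /th coefnat coef0; case: n => [|n]; rewrite ?mul0r ?mulr0. Qed.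
Lemma th1 : th 1 = 0.
Proof. exact: (thnat 1). Qed.
Lemma thz : th z = z.
Proof. by apply/funext=> n; rewrite /th /fps_z; case: eqP => [->|]; rewrite ?mulr1 ?mulr0. Qed.
Lemma thM a b : th (a * b) = th a * b + a * th b.
Proof.
apply/funext=> n; rewrite /th coefD !coefMM mulr_sumr -big_split /=.
apply: eq_bigr => i _; have hi : (i <= n)%N by rewrite -ltnS.
rewrite natrB //; ring.
Qed.

Definition Phi (y : fps) : fps := 1 + z * (y * y * y).
Definition agr k (a b : fps) := forall i, (i < k)%N -> a i = b i.

Lemma agr_mul k a b c d : agr k a b -> agr k c d -> agr k (a * c) (b * d).
Proof.
move=> hab hcd i hi; rewrite !coefMM; apply: eq_bigr => j _.
have hj : (j <= i)%N by rewrite -ltnS.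
rewrite hab ?hcd //; first by apply: leq_ltn_trans hi; apply: leq_subr.
by apply: leq_ltn_trans hi.
Qed.

Arguments agr_mul {k a b c d}.
Lemma agr_Phi k a b : agr k a b -> agr k.+1 (Phi a) (Phi b).
Proof.
move=> h; have h3 := agr_mul (agr_mul h h) h.
move=> [|i] hi; rewrite /Phi !coefD ?coefz0 ?coefzS //.
by rewrite h3.
Qed.

Arguments agr_Phi {k a b}.
Definition it k := iter k Phi 0.

Lemma it_agr k m : (k <= m)%N -> agr k (it k) (it m).
Proof.
elim: k m => [|k IH] m hkm; first by move=> i.
case: m hkm => // m hkm; exact: agr_Phi (IH m hkm).
Qed.

Arguments it_agr {k m}.
Definition F : fps := fun n => it n.+1 n.

Lemma F_agr k : agr k F (it k).
Proof. by move=> i hi; rewrite /F (it_agr hi). Qed.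

Lemma F_fix : F = Phi F.
Proof.
apply/funext=> n.
rewrite (agr_Phi (F_agr n.+1)) // /F.
by rewrite (it_agr (leqnSn n.+1)).
Qed.

Lemma cancel_unit (u x : fps) : u 0%N = 1 -> u * x = 0 -> x = 0.
Proof.
move=> u0 h; apply/funext=> n; rewrite coef0.
elim: n {-2}n (leqnn n) => [|N IH] n hn.
  move: hn; rewrite leqn0 => /eqP ->.
  by have := congr1 (fun f => f 0%N) h; rewrite coefM0 u0 mul1r coef0.
have := congr1 (fun f => f n) h; rewrite coefMM big_ord_recl /= u0 mul1r subn0 coef0.
rewrite big1 ?addr0 // => i _; rewrite IH ?mulr0 //.
by move: hn; rewrite /bump /=; lia.
Qed.

Lemma rec_uniq (p q : nat -> rat) (a b : fps) : (forall m, p m != 0) ->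
  a 0%N = b 0%N -> (forall m, p m * a m.+1 = q m * a m) ->
  (forall m, p m * b m.+1 = q m * b m) -> a = b.
Proof.
move=> hp h0 ha hb; apply/funext=> n; elim: n => // n IH.
apply: (mulfI (hp n)); by rewrite ha hb IH.
Qed.

Section Alg.
Variable R : comNzRingType.
Variables (z y a b u : R).
Hypothesis hc : z * (y * y * y) - y + 1 = 0.
Hypothesis hu : u = 1 - 3 * z * (y * y).
Hypothesis h1 : u * a = y - 1.
Hypothesis h2 : u * b = a + 3 * z * (y * y + 2 * y * a) * a.

Let ha3 : u ^+ 3 * a = u ^+ 2 * (y - 1).
Proof. by rewrite -h1; ring. Qed.
Let ha2 : u ^+ 3 * (a * a) = u * ((y - 1) * (y - 1)).
Proof. by rewrite -h1; ring. Qed.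
Let hb3 : u ^+ 3 * b = u * (y - 1) + 3 * z * (y * y) * u * (y - 1) + 6 * z * y * ((y - 1) * (y - 1)).
Proof.
transitivity (u ^+ 2 * (u * b)); first by ring.
rewrite h2 -h1; ring.
Qed.

Lemma algB : u ^+ 3 * (4 * b + 2 * a - z * (27 * b + 27 * a + 6 * y)) = 0.
Proof.
transitivity ((4 - 27 * z) * (u ^+ 3 * b) + (2 - 27 * z) * (u ^+ 3 * a) - 6 * z * y * u ^+ 3).
  by ring.
rewrite hb3 ha3 hu.
apply: (@eq_trans _ _ ((-6 + 54 * z + 18 * z * y - 18 * z * (y * y) - 162 * (z * z) * y
   + 162 * (z * z * z) * (y * y * y * y)) * (z * (y * y * y) - y + 1))); first by ring.
by rewrite hc mulr0.
Qed.

Lemma algG : u ^+ 3 * (4 * (b + (b * y + a * a + (a * a + y * b))) + 2 * (a + (a * y + y * a))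
   - 2 * (y + y * y) + 4
   - z * (27 * (b + (b * y + a * a + (a * a + y * b))) + 27 * (a + (a * y + y * a)) + 6 * (y + y * y))) = 0.
Proof.
transitivity ((4 - 27 * z) * ((1 + 2 * y) * (u ^+ 3 * b) + 2 * (u ^+ 3 * (a * a)))
  + (2 - 27 * z) * (1 + 2 * y) * (u ^+ 3 * a) + u ^+ 3 * (4 - (2 + 6 * z) * (y + y * y))).
  by ring.
rewrite hb3 ha2 ha3 hu.
apply: (@eq_trans _ _ ((6 - 18 * y + 180 * z * y - 36 * z * y^+2 - 36 * z * y^+3 - 162 * z^+2 * y
  - 162 * z^+2 * y^+2 - 108 * z^+2 * y^+3 + 54 * z^+2 * y^+4 + 54 * z^+2 * y^+5
  + 162 * z^+3 * y^+4 + 162 * z^+3 * y^+5) * (z * (y * y * y) - y + 1))); first by ring.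
by rewrite hc mulr0.
Qed.
End Alg.

Lemma alg2 (R : comNzRingType) (z y c2 : R) : z * (y * y * y) - y + 1 = 0 -> c2 = 2 ->
  let G := y + y * y in
  c2 - z - (1 + c2 * z) * G + c2 * z * (G * G) - z * z * (G * (G * G)) = 0.
Proof.
move=> hc -> G; rewrite /G.
apply: (@eq_trans _ _ ((2 + y - z - 3 * z * y - 3 * z * y^+2 - z * y^+3) * (z * (y * y * y) - y + 1)));
  first by ring.
by rewrite hc mulr0.
Qed.

Lemma derive_h1 (R : comNzRingType) (z y a : R) :
  a = z * (y * y * y) + 3 * z * (y * y) * a -> z * (y * y * y) - y + 1 = 0 ->
  (1 - 3 * z * (y * y)) * a = y - 1.
Proof.
move=> e hc; apply: (@eq_trans _ _ (a - 3 * z * (y * y) * a)); first by ring.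
rewrite {1}e; apply/eqP; rewrite -subr_eq0; apply/eqP; rewrite -hc; ring.
Qed.

Lemma derive_h2 (R : comNzRingType) (z y a b : R) :
  a = z * (y * y * y) + 3 * z * (y * y) * a ->
  b = z * (y * y * y) + 6 * z * (y * y) * a + 6 * z * y * a * a + 3 * z * (y * y) * b ->
  (1 - 3 * z * (y * y)) * b = a + 3 * z * (y * y + 2 * y * a) * a.
Proof.
move=> e1 e2; apply: (@eq_trans _ _ (b - 3 * z * (y * y) * b)); first by ring.
rewrite {1}e2; apply/eqP; rewrite -subr_eq0; apply/eqP.
apply: (@eq_trans _ _ (z * (y * y * y) + 3 * z * (y * y) * a - a)); first by ring.
by rewrite -e1 subrr.
Qed.

Section Sol.
Variable y : fps.
Hypothesis hy : y = Phi y.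

Lemma hcF : z * (y * y * y) - y + 1 = 0.
Proof. by rewrite [X in _ - X + _]hy /Phi; ring. Qed.

Lemma E1F : th y = z * (y * y * y) + 3 * z * (y * y) * th y.
Proof. by rewrite {1}hy /Phi thD th1 thM thz !thM; ring. Qed.

Lemma E2F : th (th y) = z * (y * y * y) + 6 * z * (y * y) * th y
   + 6 * z * y * th y * th y + 3 * z * (y * y) * th (th y).
Proof.
by rewrite {1}E1F !(thD, thM, thz, thnat); ring.
Qed.

Let u : fps := 1 - 3 * z * (y * y).
Lemma h1F : u * th y = y - 1.
Proof. exact: (derive_h1 _ _ _ _ E1F hcF). Qed.
Lemma h2F : u * th (th y) = th y + 3 * z * (y * y + 2 * y * th y) * th y.
Proof. exact: (derive_h2 _ _ _ _ _ E1F E2F). Qed.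

Lemma u3_0 : (u ^+ 3) 0%N = 1.
Proof. by rewrite /u !exprS expr0 !coefM0 coefB coef1 !coefM0 /= mulr0 mul0r subr0 !mulr1. Qed.

Definition LB := 4 * th (th y) + 2 * th y - z * (27 * th (th y) + 27 * th y + 6 * y).
Lemma LB0 : LB = 0.
Proof.
apply: (cancel_unit (u ^+ 3)); first exact: u3_0.
exact: (algB _ _ _ _ _ _ hcF (erefl u) h1F h2F).
Qed.

Lemma recF m : (2 * m.+1 * (2 * m + 3))%:R * y m.+1 = (3 * (3 * m + 1) * (3 * m + 2))%:R * y m.
Proof.
have := congr1 (fun f => f m.+1) LB0.
rewrite /LB coef0 coefB coefD !coefnatM coefzS coefD coefD !coefnatM /th => h.
apply/eqP; rewrite -subr_eq0; apply/eqP; rewrite -h.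
rewrite !(natrM, natrD, mulrSr); ring.
Qed.

Definition LG := let H := y + y * y in
  4 * th (th H) + 2 * th H - 2 * H + 4 - z * (27 * th (th H) + 27 * th H + 6 * H).
Lemma LG0 : LG = 0.
Proof.
apply: (cancel_unit (u ^+ 3)); first exact: u3_0.
rewrite /LG !(thD, thM).
exact: (algG _ _ _ _ _ _ hcF (erefl u) h1F h2F).
Qed.

Lemma recG m : (2 * (2 * m + 1) * (m + 2))%:R * (y + y * y) m.+1
   = (3 * (3 * m + 1) * (3 * m + 2))%:R * (y + y * y) m.
Proof.
have := congr1 (fun f => f m.+1) LG0.
rewrite /LG coef0 coefB !coefD coefN !coefnatM coefzS coefnat !coefD !coefnatM /th => h.
apply/eqP; rewrite -subr_eq0; apply/eqP; rewrite -h.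
rewrite !coefD !(natrM, natrD, mulrSr); ring.
Qed.

Lemma G0 : (y + y * y) 0%N = 2.
Proof.
have := congr1 (fun f => f 0%N) LG0.
rewrite /LG coef0 coefB !coefD coefN !coefnatM coefz0 coefnat /th /= !mul0r => h.
apply/eqP; rewrite -subr_eq0; apply/eqP; apply: (mulfI (_ : (-2 : rat) != 0)) => //; rewrite mulr0 -h !coefD; ring.
Qed.

Lemma y0 : y 0%N = 1.
Proof. by rewrite hy /Phi coefD coefz0 addr0. Qed.
End Sol.


Lemma c2E : fps_const 2 = 2.
Proof. by apply/funext=> n; rewrite coefnat; case: n. Qed.

Theorem mainTheorem2 :
  (forall n : nat, Gser n = fps_add B3 (fps_mul B3 B3) n) /\
  (forall n : nat,
     fps_add
       (fps_add
          (fps_add (fps_const 2) (fps_opp fps_z))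
          (fps_opp (fps_mul (fps_add (fps_const 1) (fps_mul (fps_const 2) fps_z)) Gser)))
       (fps_add
          (fps_mul (fps_mul (fps_const 2) fps_z) (fps_mul Gser Gser))
          (fps_opp (fps_mul (fps_mul fps_z fps_z) (fps_mul Gser (fps_mul Gser Gser)))))
       n = 0).
Proof.
have hFB : F = B3.
  apply: (rec_uniq (fun m => (2 * m.+1 * (2 * m + 3))%:R)
                   (fun m => (3 * (3 * m + 1) * (3 * m + 2))%:R)).
  - by move=> m; rewrite pnatr_eq0; lia.
  - by rewrite (y0 F F_fix) B3_0.
  - exact: (recF F F_fix).
  - exact: B3_rec.
have hG : Gser = F + F * F.
  apply: (rec_uniq (fun m => (2 * (2 * m + 1) * (m + 2))%:R)
                   (fun m => (3 * (3 * m + 1) * (3 * m + 2))%:R)).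
  - by move=> m; rewrite pnatr_eq0; lia.
  - by rewrite (G0 F F_fix) G_0.
  - exact: G_rec.
  - exact: (recG F F_fix).
split.
  by move=> n; rewrite hG hFB.
move=> n.
have E : (fps_const 2 - z - (1 + fps_const 2 * z) * Gser)
   + (fps_const 2 * z * (Gser * Gser) - z * z * (Gser * (Gser * Gser))) = 0.
  have := alg2 _ z F (fps_const 2) (hcF F F_fix) c2E.
  rewrite /= -hG => <-; ring.
rewrite -(coef0 n) -E.
reflexivity.
Qed.
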